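(* Let $d,k$ be positive integers, let $\mathscr{A}\subseteq\mathbb{R}^d$, $\mathscr{B}\subseteq\mathbb{R}^k$, let $\boldsymbol{f}:\mathscr{A}\to\mathbb{R}^k$ and let $g:\mathscr{A}\to\mathbb{R}$. Let $X$ be a random vector in $\mathbb{R}^d$ such that $\Pr\{X\in\mathscr{A}\}=1$, $\mathbb{E}[\boldsymbol{f}(X)]$ exists and $\mathbb{E}[\boldsymbol{f}(X)]\in\mathscr{B}$, and such that $\mathbb{E}[g(X)]$ exists (as a finite real number). Let $\mathscr{Y}$ be the family of all discrete random vectors $Y$ in $\mathbb{R}^d$ such that $\Pr\{Y\in\mathscr{A}\}=1$, $\mathbb{E}[\boldsymbol{f}(Y)]\in\mathscr{B}$, and $Y$ has at most $k+1$ distinct possible values. Then \[ \mathbb{E}[g(X)]\le \sup_{Y\in\mathscr{Y}}\mathbb{E}[g(Y)]. \]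
   Context: A vector $x$ is a possible value of a discrete random vector $Y$ if $\Pr\{Y=x\}>0$. All sets and functions involved are assumed measurable so that the probabilities and expectations make sense. The supremum of an empty set is defined to be $0$. *)

(* Defs.v *)
From HB Require Import structures.
From mathcomp Require Import all_boot all_order all_algebra.
From mathcomp Require Import all_classical all_reals all_analysis.
Set Implicit Arguments. Unset Strict Implicit. Unset Printing Implicit Defensive.
Import Order.TTheory GRing.Theory Num.Theory.
Local Open Scope classical_set_scope.
Local Open Scope ring_scope.

(* Supremum of a set of reals, valued in the extended reals, with the
   paper's convention sup(empty) = 0. *)
Definition paper_sup (R : realType) (S : set R) : \bar R :=
  if pselect (S = set0) then 0%E else ereal_sup (EFin @` S).

(* Values E[g(Y)] for discrete random vectors Y in R^d, described through
   their law  sum_i p_i delta_{a_i}  with n <= k+1 atoms a_i (all possible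
   values, p_i = Pr{Y = a_i} > 0), such that Pr{Y in A} = 1 (all a_i in A)
   and E[f(Y)] = sum_i p_i f(a_i) lies in B. *)
Definition discrete_values (R : realType) (d k : nat)
    (A : set 'rV[R]_d) (B : set 'rV[R]_k)
    (f : 'rV[R]_d -> 'rV[R]_k) (g : 'rV[R]_d -> R) : set R :=
  [set r | exists (n : nat) (a : 'I_n -> 'rV[R]_d) (p : 'I_n -> R),
      [/\ (n <= k.+1)%N, (forall i, 0 < p i), \sum_(i < n) p i = 1,
          (forall i, A (a i)) &
          B (\sum_(i < n) p i *: f (a i)) /\
          r = \sum_(i < n) p i * g (a i)]].

(* Main.v *)
Require Import Defs.
From HB Require Import structures.
From mathcomp Require Import all_boot all_order all_algebra.
From mathcomp Require Import all_classical all_reals all_analysis.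
From mathcomp Require Import ring lra.
Import Order.TTheory GRing.Theory Num.Theory.
Local Open Scope classical_set_scope.
Local Open Scope ring_scope.

Lemma dot_out (R : realType) (I : eqType) (J : seq I) (j : I) (a : R) (u x : I -> R) :
  j \notin J ->
  \sum_(i <- J) (if i == j then a else u i) * x i = \sum_(i <- J) u i * x i.
Proof.
move=> jJ; apply: eq_big_seq => i iJ.
by case: eqP => // eij; rewrite -eij iJ in jJ.
Qed.

Lemma sep (R : realType) (I : eqType) (J : seq I) : uniq J ->
 forall C : set (I -> R), (exists x, C x) ->
 (forall x y, C x -> C y -> C (fun i => x i + y i)) ->
 (forall s x, 0 < s -> C x -> C (fun i => s * x i)) ->
 (forall x, C x -> exists2 i, i \in J & x i != 0) ->
 exists u : I -> R, (exists2 i, i \in J & u i != 0) /\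
   forall x, C x -> 0 <= \sum_(i <- J) u i * x i.
Proof.
elim: J => [|j J IH] /= uJ C [x0 Cx0] Cadd Cscale Cnz.
  by case: (Cnz x0 Cx0).
move/andP: uJ => [jJ uJ].
have ej (s : R) : s != 0 -> exists u : I -> R, (exists2 i, i \in j :: J & u i != 0) /\
   forall x, C x -> \sum_(i <- j :: J) u i * x i = s * x j.
  move=> s0; exists (fun i => if i == j then s else 0); split.
    by exists j; rewrite ?mem_head ?eqxx.
  move=> x Cx; rewrite big_cons eqxx (@dot_out _ _ _ _ _ _ _ jJ).
  by rewrite big1 ?addr0 // => i _; rewrite mul0r.
have [[y1 Cy1 y1n]|nneg] := pselect (exists2 y, C y & y j < 0); last first.
  have [u [uz hu]] := ej 1 (oner_neq0 _).
  exists u; split => // x Cx; rewrite hu // mul1r.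
  by rewrite leNgt; apply/negP => xn; apply: nneg; exists x.
have [[x1 Cx1 x1p]|npos] := pselect (exists2 x, C x & 0 < x j); last first.
  have [u [uz hu]] := ej (-1) ltac:(by rewrite oppr_eq0 oner_neq0).
  exists u; split => // x Cx; rewrite hu // mulN1r oppr_ge0.
  by rewrite leNgt; apply/negP => xp; apply: npos; exists x.
pose C0 := fun x => C x /\ x j = 0.
have comb x y : C x -> C y -> 0 < x j -> y j < 0 ->
    C0 (fun i => (- y j) * x i + x j * y i).
  move=> Cx Cy xp yn; split; last by rewrite /= mulrC; lra.
  by apply: Cadd; apply: Cscale => //; rewrite ?oppr_gt0.
have [] := IH uJ C0.
- by exists (fun i => (- y1 j) * x1 i + x1 j * y1 i); apply: comb.
- by move=> x y [Cx xj] [Cy yj]; split; [apply: Cadd|rewrite xj yj addr0].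
- by move=> s x s0 [Cx xj]; split; [apply: Cscale|rewrite xj mulr0].
- move=> x [Cx xj]; have [i] := Cnz x Cx; rewrite in_cons => /orP[/eqP ->|iJ].
    by rewrite xj eqxx.
  by exists i.
move=> u' [[i0 i0J u'i0] hu'].
pose D x := \sum_(i <- J) u' i * x i.
have key x y : C x -> 0 < x j -> C y -> y j < 0 -> - D x / x j <= D y / (- y j).
  move=> Cx xp Cy yn.
  have := hu' _ (comb x y Cx Cy xp yn).
  rewrite (eq_bigr (fun i => -y j * (u' i * x i) + x j * (u' i * y i))); last first.
    by move=> i _; rewrite mulrDr !mulrA ![u' i * _ ]mulrC.
  rewrite big_split /= -!mulr_sumr -/(D x) -/(D y) => h.
  have ynp : 0 < - y j by rewrite oppr_gt0.
  rewrite ler_pdivrMr // mulrAC ler_pdivlMr //.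
  lra.
pose Lset := [set r | exists x, [/\ C x, 0 < x j & r = - D x / x j]].
have ubL : ubound Lset (D y1 / (- y1 j)).
  by move=> r [x [Cx xp ->]]; apply: key.
have hub : has_ubound Lset by exists (D y1 / (- y1 j)).
pose a := sup Lset.
exists (fun i => if i == j then a else u' i); split.
  exists i0; first by rewrite in_cons i0J orbT.
  have -> : (i0 == j) = false by apply/negbTE; apply: contraNneq jJ => <-.
  done.
move=> x Cx; rewrite big_cons eqxx (@dot_out _ _ _ _ _ _ _ jJ) -/(D x).
case: (ltgtP (x j) 0) => xj.
- have : a <= D x / (- x j).
    apply: ge_sup; first by exists (- D x1 / x1 j); exists x1.
    by move=> r [z [Cz zp ->]]; apply: key.
  have xnp : 0 < - x j by rewrite oppr_gt0.
  rewrite ler_pdivlMr // => h; lra.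
- have : - D x / x j <= a by apply: ub_le_sup => //; exists x.
  rewrite ler_pdivrMr // => h; lra.
- by rewrite xj mulr0 add0r; apply: hu'.
Qed.

Section L.
Variables (R : realType) (dT : measure_display) (T : measurableType dT).
Variable (P : probability T R).
Variables (U I : eqType) (F : U -> I -> R) (X : T -> U).

Definition cc i := fine (\int[P]_t (F (X t) i)%:E).

Lemma lin_int (J : seq I) (u : I -> R) :
  (forall i, i \in J -> P.-integrable setT (fun t => (F (X t) i)%:E)) ->
  P.-integrable setT (fun t => (\sum_(i <- J) u i * F (X t) i)%:E) /\
  (\int[P]_t (\sum_(i <- J) u i * F (X t) i)%:E = (\sum_(i <- J) u i * cc i)%:E)%E.
Proof.
elim: J => [|j J IH] hint.
  under eq_fun do rewrite big_nil.
  by rewrite big_nil; split; [exact: integrable0 | exact: integral0].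
have [i1 e1] := IH (fun i iJ => hint i (mem_behead (s:=j::J) iJ)).
have hj := hint j (mem_head _ _).
have -> : (fun t => (\sum_(i <- j :: J) u i * F (X t) i)%:E) =
   ((fun t => (u j)%:E * (F (X t) j)%:E) \+ (fun t => (\sum_(i <- J) u i * F (X t) i)%:E))%E.
  by apply: funext => t; rewrite big_cons /= EFinD EFinM.
split; first by apply: integrableD => //; apply: integrableZl.
rewrite integralD //; last by apply: integrableZl.
rewrite integralZl // e1 big_cons EFinD EFinM /cc fineK //.
exact: integrable_fin_num.
Qed.

Lemma ae0 (h : T -> R) : P.-integrable setT (fun t => (h t)%:E) ->
  {ae P, forall t, 0 <= h t} -> (\int[P]_t (h t)%:E <= 0)%E ->
  {ae P, forall t, h t = 0}.
Proof.
move=> ih hge hle.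
have mh := measurable_int _ ih.
have e : (\int[P]_t `|(h t)%:E| = \int[P]_t (h t)%:E)%E.
  apply: ae_eq_integral => //.
    exact: measurable_int (integrable_abse ih).
  by apply: filterS hge => t ht _; rewrite gee0_abs // lee_fin.
have e0 : (\int[P]_t `|(h t)%:E| = 0)%E.
  apply/eqP; rewrite eq_le; apply/andP; split; first by rewrite e.
  by apply: integral_ge0 => t _; exact: abse_ge0.
have := (ae_eq_integral_abs P measurableT mh).1 e0.
by apply: filterS => t /(_ Logic.I) [].
Qed.

Definition Good (J : seq I) (A : set U) (l : seq (R * U)) :=
  [/\ (forall p, p \in l -> 0 < p.1 /\ A p.2), \sum_(p <- l) p.1 = 1 &
     forall i, i \in J -> \sum_(p <- l) p.1 * F p.2 i = cc i].

Definition vec (l : seq (R * U)) (t : R) : option I -> R :=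
  fun o => match o with
  | None => \sum_(p <- l) p.1 - t
  | Some i => \sum_(p <- l) p.1 * F p.2 i - t * cc i end.

Lemma step (J : seq I) (A : set U) : uniq J -> {ae P, forall t, A (X t)} ->
  (forall i, i \in J -> P.-integrable setT (fun t => (F (X t) i)%:E)) ->
  ~ (exists l, Good J A l) ->
  exists (u0 : R) (u : I -> R) (j : I), [/\ j \in J, u j != 0,
    {ae P, forall t, u0 + \sum_(i <- J) u i * F (X t) i = 0} &
    u0 + \sum_(i <- J) u i * cc i = 0].
Proof.
move=> uJ hA hint nex.
pose J2 := None :: map Some J.
have uJ2 : uniq J2.
  rewrite /= map_inj_uniq ?uJ ?andbT; last by move=> a b [].
  by apply/mapP => -[].
pose D := [set x : option I -> R | exists l t, [/\ (forall p, p \in l -> 0 < p.1 /\ A p.2),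
   0 <= t, 0 < \sum_(p <- l) p.1 + t & x = vec l t]].
have [] := @sep R _ J2 uJ2 D.
- exists (vec [::] 1); exists [::], 1; split => //.
  by rewrite big_nil add0r.
- move=> x y [l1 [t1 [h1 t1p s1 ->]]] [l2 [t2 [h2 t2p s2 ->]]].
  exists (l1 ++ l2), (t1 + t2); split.
  + by move=> p; rewrite mem_cat => /orP[/h1|/h2].
  + by rewrite addr_ge0.
  + rewrite big_cat /=; lra.
  + by apply: funext => -[i|] /=; rewrite big_cat /=; ring.
- move=> s x s0 [l [t [h1 tp s1 ->]]].
  exists (map (fun p => (s * p.1, p.2)) l), (s * t); split.
  + move=> p /mapP [q /h1 [q1 q2] ->] /=; split => //; exact: mulr_gt0.
  + exact: mulr_ge0 (ltW s0) tp.
  + by rewrite big_map /= -mulr_sumr -mulrDr mulr_gt0.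
  + apply: funext => -[i|] /=; rewrite big_map /= -?mulr_sumr; first last.
      by rewrite mulrBr.
    rewrite mulrBr mulrA; congr (_ - _); rewrite mulr_sumr; apply: eq_bigr => p _.
    by rewrite mulrA.
- move=> x [l [t [h1 tp s1 ->]]].
  case: (pselect (exists2 i, i \in J2 & vec l t i != 0)) => // hno; exfalso.
  have z i : i \in J2 -> vec l t i = 0.
    by move=> iJ; case: (eqVneq (vec l t i) 0) => // h; exfalso; apply: hno; exists i.
  have zN := z None (mem_head _ _); rewrite /= in zN.
  have tpos : 0 < t by lra.
  have et : \sum_(p <- l) p.1 = t by lra.
  apply: nex; exists (map (fun p => (p.1 / t, p.2)) l); split.
  + move=> p /mapP [q /h1 [q1 q2] ->] /=; split => //; exact: divr_gt0.
  + by rewrite big_map /= -mulr_suml et divff // gt_eqF.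
  + move=> i iJ; have := z (Some i); rewrite /= in_cons map_f // orbT => /(_ isT) zi.
    rewrite big_map /=.
    under eq_bigr do rewrite mulrAC.
    rewrite -mulr_suml.
    rewrite -[cc i](mulfK (lt0r_neq0 tpos)); congr (_ / _); lra.
move=> u2 [] [] o1 oJ2 uo hD.
pose u0 := u2 None; pose u := fun i => u2 (Some i).
have hdot x : \sum_(o <- J2) u2 o * x o = u0 * x None + \sum_(i <- J) u i * x (Some i).
  by rewrite big_cons big_map.
have ha a : A a -> 0 <= u0 + \sum_(i <- J) u i * F a i.
  move=> Aa; have := hD (vec [:: (1, a)] 0).
  rewrite hdot /= big_seq1 /= subr0 mulr1.
  under eq_bigr do rewrite big_seq1 /= mul1r mul0r subr0.
  apply; exists [:: (1, a)], 0; split => //.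
  - by move=> p; rewrite mem_seq1 => /eqP -> /=.
  - by rewrite big_seq1 /= addr0.
have hc : u0 + \sum_(i <- J) u i * cc i <= 0.
  have := hD (vec [::] 1).
  rewrite hdot /= big_nil.
  under eq_bigr do rewrite big_nil mul1r.
  have -> : \sum_(i <- J) u i * (0 - cc i) = - \sum_(i <- J) u i * cc i.
    by rewrite -sumrN; apply: eq_bigr => i _; ring.
  move=> h; suff : 0 <= u0 * (0 - 1) - \sum_(i <- J) u i * cc i by lra.
  apply: h; exists [::], 1; split => //.
  by rewrite big_nil add0r.
have [iS eS] := lin_int J u hint.
have ih : P.-integrable setT (fun t => (u0 + \sum_(i <- J) u i * F (X t) i)%:E).
  have -> : (fun t => (u0 + \sum_(i <- J) u i * F (X t) i)%:E) =
      ((EFin \o cst u0) \+ (fun t => (\sum_(i <- J) u i * F (X t) i)%:E))%E.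
    by apply: funext => t; rewrite /= EFinD.
  apply: integrableD => //; exact: finite_measure_integrable_cst.
have eI : (\int[P]_t (u0 + \sum_(i <- J) u i * F (X t) i)%:E =
     (u0 + \sum_(i <- J) u i * cc i)%:E)%E.
  under eq_integral do rewrite EFinD.
  rewrite integralD //; last exact: finite_measure_integrable_cst.
  have P1 : P [set: T] = 1%E by apply: probability_setT.
  rewrite eS integral_cst // [X in (_ * X)%E](_ : _ = 1%E); last exact: probability_setT.
  by rewrite mule1 EFinD.
have hae : {ae P, forall t, u0 + \sum_(i <- J) u i * F (X t) i = 0}.
  apply: ae0 => //; first by apply: filterS hA => t; exact: ha.
  by rewrite eI lee_fin.
have hc0 : u0 + \sum_(i <- J) u i * cc i = 0.
  have : (\int[P]_t (u0 + \sum_(i <- J) u i * F (X t) i)%:E = \int[P]_t (cst 0 t))%E.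
    apply: ae_eq_integral => //; first exact: measurable_int ih.
    by apply: filterS hae => t -> _.
  by rewrite eI integral0 => -[].
case: (pselect (exists2 j, j \in J & u j != 0)) => [[j jJ uj]|nj].
  by exists u0, u, j; split.
exfalso.
have uz i : i \in J -> u i = 0.
  by move=> iJ; case: (eqVneq (u i) 0) => // h; exfalso; apply: nj; exists i.
have u00 : u0 = 0.
  by move: hc0; rewrite big1_seq ?addr0 // => i /andP[_ /uz ->]; rewrite mul0r.
move: oJ2 uo; rewrite in_cons => /orP[/eqP ->|/mapP [i iJ ->]].
  by rewrite -/u0 u00 eqxx.
by rewrite -/(u i) uz // eqxx.
Qed.

Lemma Lmain n : forall (J : seq I) (A : set U), uniq J -> (size J <= n)%N ->
  {ae P, forall t, A (X t)} ->
  (forall i, i \in J -> P.-integrable setT (fun t => (F (X t) i)%:E)) ->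
  exists l, Good J A l.
Proof.
elim: n => [|n IH] J A uJ sJ hA hint;
  case: (pselect (exists l, Good J A l)) => // nex;
  have [u0 [u [j [jJ uj hae hc]]]] := step _ _ uJ hA hint nex.
  by move: sJ; rewrite leqn0 => /nilP eJ; rewrite eJ in jJ.
pose A' := fun a => A a /\ u0 + \sum_(i <- J) u i * F a i = 0.
have pJ := perm_to_rem jJ.
have [] := IH (rem j J) A' (rem_uniq j uJ).
- by rewrite size_rem //; case: (size J) sJ.
- by apply: filterS2 hA hae => t h1 h2; split.
- by move=> i; rewrite mem_rem_uniq // inE => /andP[_ /hint].
move=> l [h1 h2 h3]; exfalso; apply: nex; exists l; split => //.
  by move=> p /h1 [? []].
move=> i iJ; case: (eqVneq i j) => [->|ij]; last first.
  by apply: h3; rewrite mem_rem_uniq // inE ij iJ.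
have e1 p : p \in l -> u j * F p.2 j = - u0 - \sum_(i <- rem j J) u i * F p.2 i.
  move=> /h1 [_ [_]]; rewrite (perm_big _ pJ) big_cons /= => ?; lra.
have e2 : u j * cc j = - u0 - \sum_(i <- rem j J) u i * cc i.
  by move: hc; rewrite (perm_big _ pJ) big_cons /= => ?; lra.
apply: (mulfI uj); rewrite e2 mulr_sumr.
rewrite (eq_big_seq (fun p => - (u0 * p.1) - \sum_(i <- rem j J) u i * (p.1 * F p.2 i))); last first.
  move=> p pl; rewrite mulrCA e1 // mulrBr mulr_sumr; congr (_ - _); first by ring.
  by apply: eq_bigr => k _; ring.
rewrite sumrB sumrN -mulr_sumr h2 mulr1 exchange_big /=; congr (_ - _).
apply: eq_big_seq => k; rewrite mem_rem_uniq // inE => /andP[ij iJ'].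
by rewrite -mulr_sumr h3 // mem_rem_uniq // inE ij.
Qed.

End L.

Lemma reduce (R : realType) d k (A : set 'rV[R]_d) (f : 'rV[R]_d -> 'rV[R]_k)
  (g : 'rV[R]_d -> R) N :
 forall (a : 'I_N -> 'rV[R]_d) (lam : 'I_N -> R), (forall i, 0 <= lam i) ->
 \sum_i lam i = 1 -> (forall i, A (a i)) ->
 exists n (a' : 'I_n -> 'rV[R]_d) (p : 'I_n -> R),
   [/\ (n <= k.+1)%N, (forall i, 0 < p i), \sum_i p i = 1, (forall i, A (a' i)) &
   \sum_i p i *: f (a' i) = \sum_i lam i *: f (a i) /\
   \sum_i lam i * g (a i) <= \sum_i p i * g (a' i)].
Proof.
elim: N => [|N IH] a lam l0 l1 hA.
  by move: l1; rewrite big_ord0 => /eqP; rewrite eq_sym oner_eq0.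
have rm (lam' : 'I_N.+1 -> R) i0 : (forall i, 0 <= lam' i) -> lam' i0 = 0 ->
    \sum_i lam' i = 1 ->
    exists n (a' : 'I_n -> 'rV[R]_d) (p : 'I_n -> R),
   [/\ (n <= k.+1)%N, (forall i, 0 < p i), \sum_i p i = 1, (forall i, A (a' i)) &
   \sum_i p i *: f (a' i) = \sum_i lam' i *: f (a i) /\
   \sum_i lam' i * g (a i) <= \sum_i p i * g (a' i)].
  move=> h0 hi0 h1.
  have [] := IH (fun i => a (lift i0 i)) (fun i => lam' (lift i0 i)) => //.
    by move: h1; rewrite (bigD1_ord i0) //= hi0 add0r.
  move=> n [a' [p [h1' h2' h3' h4' [h5' h6']]]].
  exists n, a', p; split => //; split.
    by rewrite h5' (bigD1_ord i0) //= hi0 scale0r add0r.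
  by rewrite (bigD1_ord i0) //= hi0 mul0r add0r.
have [[i0 li0]|lnz] := pselect (exists i, lam i = 0); first exact: (rm lam i0 l0 li0 l1).
have lpos i : 0 < lam i.
  by rewrite lt_neqAle l0 andbT eq_sym; apply/eqP => h; apply: lnz; exists i.
case: (leqP N.+1 k.+1) => hN.
  by exists N.+1, a, lam; split => //; split.
pose M : 'M[R]_(N.+1, k + 1) := row_mx (\matrix_(i < N.+1) f (a i)) (const_mx 1).
have kz : kermx M != 0.
  rewrite -mxrank_eq0 mxrank_ker; apply/eqP => h.
  have h2 : (\rank M <= k.+1)%N by rewrite -[k.+1]addn1 rank_leq_col.
  move/eqP: h; rewrite subn_eq0 => h3.
  by have := leq_trans hN (leq_trans h3 h2); rewrite ltnn.
have [i1 ri1] : exists i, row i (kermx M) != 0.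
  apply/existsP; apply: contraNT kz; rewrite negb_exists => /forallP hr.
  by apply/eqP/row_matrixP => i; rewrite row0; apply/eqP; move: (hr i); rewrite negbK.
pose v := row i1 (kermx M).
have vM : v *m M = 0 by rewrite /v -row_mul mulmx_ker row0.
move: vM; rewrite mul_mx_row => /eqP; rewrite row_mx_eq0 => /andP[/eqP vf /eqP v1].
have wf0 : \sum_i v 0 i *: f (a i) = 0.
  by rewrite -[RHS]vf mulmx_sum_row; apply: eq_bigr => i _; rewrite rowK.
have w10 : \sum_i v 0 i = 0.
  have h := congr1 (fun m : 'M[R]_(1,1) => m 0 0) v1; rewrite /= !mxE in h.
  by rewrite -[RHS]h; apply: eq_bigr => i _; rewrite [const_mx 1 i 0]mxE mulr1.
have [j0 vj0] : exists j, v 0 j != 0.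
  apply/existsP; apply: contraNT ri1; rewrite negb_exists => /forallP hr.
  apply/eqP; apply/rowP => j; rewrite [RHS]mxE.
  by apply/eqP; move: (hr j); rewrite negbK.
have [w [wf w1 [j1 wj1] wg]] : exists w : 'I_N.+1 -> R,
    [/\ \sum_i w i *: f (a i) = 0, \sum_i w i = 0, exists i, w i != 0 &
        0 <= \sum_i w i * g (a i)].
  case: (lerP 0 (\sum_i v 0 i * g (a i))) => hg.
    by exists (fun i => v 0 i); split => //; exists j0.
  exists (fun i => - v 0 i); split.
  - by under eq_bigr do rewrite scaleNr; rewrite sumrN wf0 oppr0.
  - by rewrite sumrN w10 oppr0.
  - by exists j0; rewrite oppr_eq0.
  - under eq_bigr do rewrite mulNr; rewrite sumrN oppr_ge0; exact: ltW.
have [i2 wi2] : exists i, w i < 0.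
  apply/existsP; apply: contraT; rewrite negb_exists => /forallP hr.
  have hw i : 0 <= w i by rewrite leNgt; exact: hr.
  have := psumr_eq0P (fun i _ => hw i) w1 (i := j1) isT.
  by move/eqP; rewrite (negbTE wj1).
case: (@arg_minP _ _ _ i2 (fun i => w i < 0) (fun i => lam i / - w i) wi2).
move=> i0 wi0 hmin.
pose t := lam i0 / - w i0.
have wi0p : 0 < - w i0 by rewrite oppr_gt0.
have t0 : 0 <= t by rewrite /t divr_ge0 // ltW.
pose lam' i := lam i + t * w i.
have [] := rm lam' i0.
- move=> i; rewrite /lam'; case: (lerP 0 (w i)) => hw.
    by rewrite addr_ge0 // mulr_ge0.
  have := hmin i hw; rewrite -/t.
  have wip : 0 < - w i by rewrite oppr_gt0.
  rewrite ler_pdivlMr // => h; nra.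
- by rewrite /lam' /t invrN mulrN mulNr divfK ?subrr // ltr0_neq0.
- by rewrite /lam' big_split /= l1 -mulr_sumr w1 mulr0 addr0.
move=> n [a' [p [h1 h2 h3 h4 [h5 h6]]]].
exists n, a', p; split => //; split.
  rewrite h5 /lam'; under eq_bigr do rewrite scalerDl -scalerA.
  by rewrite big_split /= -scaler_sumr wf scaler0 addr0.
apply: le_trans h6; rewrite /lam'.
under [X in _ <= X]eq_bigr do rewrite mulrDl -mulrA.
rewrite big_split /= -mulr_sumr lerDl; exact: mulr_ge0.
Qed.

Theorem theorem3 (R : realType) (d k : nat) (hd : (0 < d)%N) (hk : (0 < k)%N)
    (A : set 'rV[R]_d) (B : set 'rV[R]_k)
    (f : 'rV[R]_d -> 'rV[R]_k) (g : 'rV[R]_d -> R)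
    (dT : measure_display) (T : measurableType dT) (P : probability T R)
    (X : T -> 'rV[R]_d)
    (mX : forall j : 'I_d, measurable_fun setT (fun t => X t ord0 j))
    (mA : measurable (X @^-1` A))
    (hA : P (X @^-1` A) = 1%E)
    (intf : forall j : 'I_k, P.-integrable setT (fun t => (f (X t) ord0 j)%:E))
    (hB : B (\row_(j < k) fine (\int[P]_t (f (X t) ord0 j)%:E)))
    (intg : P.-integrable setT (fun t => (g (X t))%:E)) :
  (\int[P]_t (g (X t))%:E <= paper_sup (discrete_values A B f g))%E.
Proof.
pose F (a : 'rV[R]_d) (o : option 'I_k) : R :=
  match o with Some j => f a ord0 j | None => g a end.
pose J := None :: map Some (enum 'I_k).
have uJ : uniq J.
  rewrite /= map_inj_uniq ?enum_uniq ?andbT; last by move=> x y [].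
  by apply/mapP => -[].
have hA' : {ae P, forall t, A (X t)}.
  change (almost_everywhere P (fun t => A (X t))).
  rewrite /almost_everywhere; apply/negligibleP.
    exact: measurableC.
  have e := probability_setC P mA; rewrite hA subee // in e; exact: e.
have hint : forall i, i \in J -> P.-integrable setT (fun t => (F (X t) i)%:E).
  by move=> [j|] _ /=; [exact: intf | exact: intg].
have [l [h1 h2 h3]] := @Lmain _ _ _ P _ _ F X (size J) J A uJ (leqnn _) hA' hint.
pose x0 : R * 'rV[R]_d := (0, 0).
pose a := fun i : 'I_(size l) => (nth x0 l i).2.
pose lam := fun i : 'I_(size l) => (nth x0 l i).1.
have inl (i : 'I_(size l)) : nth x0 l i \in l := mem_nth x0 (ltn_ord i).
have l1 : \sum_i lam i = 1 by rewrite /lam -h2 (big_nth x0) big_mkord.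
have [n [a' [p [hn hp hs hAa [hf hg]]]]] := @reduce R d k A f g (size l) a lam
   (fun i => ltW (h1 _ (inl i)).1) l1 (fun i => (h1 _ (inl i)).2).
have hr : discrete_values A B f g (\sum_i p i * g (a' i)).
  exists n, a', p; split => //; split => //.
  rewrite hf; suff -> : \sum_i lam i *: f (a i) =
      \row_(j < k) fine (\int[P]_t (f (X t) ord0 j)%:E) by [].
  apply/rowP => j; rewrite mxE summxE.
  have e := h3 (Some j) ltac:(by rewrite /J in_cons map_f ?mem_enum ?orbT).
  rewrite /cc /= in e; rewrite -e (big_nth x0) big_mkord.
  by apply: eq_bigr => i _; rewrite mxE.
rewrite /paper_sup; destruct (pselect _) as [S0|nS0].
  by rewrite S0 in hr.
have eg : (\int[P]_t (g (X t))%:E = (\sum_i lam i * g (a i))%:E)%E.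
  rewrite -[LHS]fineK ?integrable_fin_num //; congr EFin.
  have e := h3 None (mem_head _ _); rewrite /cc /= in e.
  by rewrite -e (big_nth x0) big_mkord.
rewrite eg; apply: (@le_trans _ _ (\sum_i p i * g (a' i))%:E).
  by rewrite lee_fin.
by apply: ereal_sup_ubound; exists (\sum_i p i * g (a' i)).
Qed.
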